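(* Let $A$ be a monoid and let $0\to M\xrightarrow{i}N\xrightarrow{j}P\to0$ be an admissible short exact sequence of $A$-sets with $P$ projective. Then the sequence splits; more precisely, it is isomorphic to the canonical short exact sequence $0\to M\to M\vee P\to P\to0$.
   Context: A monoid is a commutative multiplicative semigroup with $1$ and absorbing $0$. An $A$-set is a pointed set $(M,\ast)$ with an action satisfying $(ab).m=a.(b.m)$, $a.\ast=\ast$, $0.m=\ast$, $1.m=m$; morphisms are equivariant maps; $0$ denotes the one-point $A$-set. The kernel of $f:M\to N$ is $f^{-1}(\ast)$ and its image is $f(M)$; a sequence $M_1\to M_2\to M_3$ is exact at $M_2$ if the kernel of the second map equals the image of the first, and a short exact sequence $0\to M_1\to M_2\to M_3\to0$ is exact at each of $M_1,M_2,M_3$. A morphism is normal if each fibre over a non-base point has at most one element; a short exact sequence is admissible if all its morphisms are normal. $M\vee P$ is the wedge sum (disjoint union with base points identified), and the canonical sequence uses the inclusion of $M$ and the map collapsing $M$ to the base point. A projective $A$-set is a projective object of the category of $A$-sets. *)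

(* Defs.v *)
From Stdlib Require Import ProofIrrelevance.
Set Implicit Arguments.
Unset Strict Implicit.

Record monoid := Monoid {
  mcar :> Type;
  mmul : mcar -> mcar -> mcar;
  mone : mcar;
  mzero : mcar;
  mmulA : forall a b c, mmul a (mmul b c) = mmul (mmul a b) c;
  mmulC : forall a b, mmul a b = mmul b a;
  mmul1 : forall a, mmul mone a = a;
  mmul0 : forall a, mmul mzero a = mzero }.

Record aset (A : monoid) := ASet {
  scar :> Type;
  sbase : scar;
  sact : mcar A -> scar -> scar;
  sactM : forall a b m, sact (@mmul A a b) m = sact a (sact b m);
  sact_base : forall a, sact a sbase = sbase;
  sact0 : forall m, sact (@mzero A) m = sbase;
  sact1 : forall m, sact (@mone A) m = m }.

Arguments sbase {A} a0.
Arguments sact {A} a0 _ _.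

Record ahom (A : monoid) (M N : aset A) := AHom {
  hfun :> M -> N;
  hfunA : forall a m, hfun (sact M a m) = sact N a (hfun m) }.

Definition zero_aset (A : monoid) : aset A :=
  @ASet A unit tt (fun _ _ => tt) (fun _ _ _ => eq_refl) (fun _ => eq_refl)
        (fun m => match m with tt => eq_refl end)
        (fun m => match m with tt => eq_refl end).

Definition from_zero (A : monoid) (M : aset A) : ahom (zero_aset A) M.
Proof. refine (@AHom A (zero_aset A) M (fun _ => sbase M) _).
  intros a m; simpl; symmetry; apply sact_base. Defined.

Definition to_zero (A : monoid) (M : aset A) : ahom M (zero_aset A) :=
  @AHom A M (zero_aset A) (fun _ => tt) (fun _ _ => eq_refl).

Definition exact_at (A : monoid) (X Y Z : aset A) (f : ahom X Y) (g : ahom Y Z) :=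
  forall y : Y, g y = sbase Z <-> exists x : X, f x = y.

Definition short_exact (A : monoid) (M N P : aset A) (i : ahom M N) (j : ahom N P) :=
  exact_at (from_zero M) i /\ exact_at i j /\ exact_at j (to_zero P).

Definition normal (A : monoid) (X Y : aset A) (f : ahom X Y) :=
  forall y : Y, y <> sbase Y -> forall x x' : X, f x = y -> f x' = y -> x = x'.

Definition admissible_ses (A : monoid) (M N P : aset A) (i : ahom M N) (j : ahom N P) :=
  short_exact i j /\ normal (from_zero M) /\ normal i /\ normal j /\ normal (to_zero P).

Definition epi (A : monoid) (X Y : aset A) (g : ahom X Y) :=
  forall (Z : aset A) (u v : ahom Y Z), (forall x, u (g x) = v (g x)) -> forall y, u y = v y.

Definition projective (A : monoid) (P : aset A) :=
  forall (X Y : aset A) (g : ahom X Y) (f : ahom P Y),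
    epi g -> exists h : ahom P X, forall p, g (h p) = f p.

Definition is_iso (A : monoid) (X Y : aset A) (f : ahom X Y) :=
  exists g : ahom Y X, (forall x, g (f x) = x) /\ (forall y, f (g y) = y).

(* Wedge sum M \/ P, modelled as the sub-A-set of M x P of pairs having at least one
   coordinate equal to the base point (disjoint union with base points identified). *)
Definition wedge_car (A : monoid) (M P : aset A) :=
  { x : M * P | fst x = sbase M \/ snd x = sbase P }.

Definition wedge_act (A : monoid) (M P : aset A) (a : A) (x : wedge_car M P) :
  wedge_car M P.
Proof.
  destruct x as [[m p] H]. exists (sact M a m, sact P a p).
  simpl in *; destruct H as [H|H]; [left|right]; rewrite H; apply sact_base.
Defined.

Lemma wedge_eq (A : monoid) (M P : aset A) (x y : wedge_car M P) :
  proj1_sig x = proj1_sig y -> x = y.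
Proof.
  destruct x as [x Hx], y as [y Hy]; simpl; intros ->.
  f_equal; apply proof_irrelevance.
Qed.

Definition wedge (A : monoid) (M P : aset A) : aset A.
Proof.
  refine (@ASet A (wedge_car M P)
            (exist _ (sbase M, sbase P) (or_introl eq_refl))
            (@wedge_act A M P) _ _ _ _).
  - intros a b [[m p] H]; apply wedge_eq; simpl; f_equal; apply sactM.
  - intros a; apply wedge_eq; simpl; f_equal; apply sact_base.
  - intros [[m p] H]; apply wedge_eq; simpl; f_equal; apply sact0.
  - intros [[m p] H]; apply wedge_eq; simpl; f_equal; apply sact1.
Defined.

Definition wedge_incl (A : monoid) (M P : aset A) : ahom M (wedge M P).
Proof.
  refine (@AHom A M (wedge M P)
            (fun m => exist _ (m, sbase P) (or_intror eq_refl)) _).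
  intros a m; apply wedge_eq; simpl; f_equal; symmetry; apply sact_base.
Defined.

Definition wedge_coll (A : monoid) (M P : aset A) : ahom (wedge M P) P.
Proof.
  refine (@AHom A (wedge M P) P (fun x => snd (proj1_sig x)) _).
  intros a [[m p] H]; reflexivity.
Defined.

(* Main.v *)
Require Import Defs.
From Stdlib Require Import ClassicalEpsilon ProofIrrelevance.

Definition iinv (A : monoid) (M N : aset A) (i : ahom M N) (n : N) : M :=
  match excluded_middle_informative (exists m, i m = n) with
  | left H => proj1_sig (constructive_indefinite_description _ H)
  | right _ => sbase M end.

Arguments iinv {A M N} i n.

Lemma iinv_spec (A : monoid) (M N : aset A) (i : ahom M N) (n : N) :
  (exists m, i m = n) -> i (iinv i n) = n.
Proof.
  intros H; unfold iinv; destruct (excluded_middle_informative _) as [H'|H'].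
  - exact (proj2_sig (constructive_indefinite_description _ H')).
  - contradiction.
Qed.

Lemma hom_base (A : monoid) (X Y : aset A) (f : ahom X Y) : f (sbase X) = sbase Y.
Proof.
  rewrite <- (sact0 (sbase X)), hfunA. apply sact0.
Qed.

Definition beta_fun (A : monoid) (M N P : aset A) (i : ahom M N) (j : ahom N P) (n : N)
  : wedge_car M P :=
  match excluded_middle_informative (j n = sbase P) with
  | left _ => exist _ (iinv i n, sbase P) (or_intror eq_refl)
  | right _ => exist _ (sbase M, j n) (or_introl eq_refl) end.

Arguments beta_fun {A M N P} i j n.

Theorem proposition2p29 (A : monoid) (M N P : aset A) (i : ahom M N) (j : ahom N P) :
  admissible_ses i j -> projective P ->
  exists (alpha : ahom M M) (beta : ahom N (wedge M P)) (gamma : ahom P P),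
    is_iso alpha /\ is_iso beta /\ is_iso gamma /\
    (forall m : M, beta (i m) = wedge_incl M P (alpha m)) /\
    (forall n : N, wedge_coll M P (beta n) = gamma (j n)).
Proof.
  intros [[E1 [E2 E3]] [_ [Ni [Nj _]]]] Hproj.
  set (idM := @AHom A M M (fun m => m) (fun _ _ => eq_refl)).
  set (idP := @AHom A P P (fun m => m) (fun _ _ => eq_refl)).
  assert (jsurj : forall p, exists n, j n = p).
  { intros p. apply (proj1 (E3 p)). reflexivity. }
  assert (Hepi : epi j).
  { intros Z u v H y. destruct (jsurj y) as [n <-]. apply H. }
  destruct (Hproj N P j idP Hepi) as [s Hs]. simpl in Hs.
  assert (iinj : forall m m', i m = i m' -> m = m').
  { intros m m' Heq.
    destruct (classic (i m = sbase N)) as [Hb|Hb].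
    - assert (m = sbase M).
      { destruct (proj1 (E1 m) Hb) as [[] <-]. reflexivity. }
      assert (m' = sbase M).
      { rewrite Heq in Hb. destruct (proj1 (E1 m') Hb) as [[] <-]. reflexivity. }
      congruence.
    - eapply Ni; [exact Hb | reflexivity | symmetry; exact Heq]. }
  assert (iinvi : forall m, iinv i (i m) = m).
  { intros m. apply iinj. apply iinv_spec. eauto. }
  assert (jker : forall n, j n = sbase P -> i (iinv i n) = n).
  { intros n H. apply iinv_spec. apply (proj1 (E2 n) H). }
  assert (sj : forall n, j n <> sbase P -> s (j n) = n).
  { intros n H. eapply Nj; [exact H | apply Hs | reflexivity]. }
  assert (ji : forall m, j (i m) = sbase P).
  { intros m. apply (proj2 (E2 (i m))). eauto. }
  assert (bA : forall a n, beta_fun i j (sact N a n) = sact (wedge M P) a (beta_fun i j n)).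
  { intros a n. apply wedge_eq. unfold beta_fun.
    destruct (excluded_middle_informative (j n = sbase P)) as [H|H];
    destruct (excluded_middle_informative (j (sact N a n) = sbase P)) as [H'|H'];
    simpl.
    - f_equal; [| symmetry; apply sact_base].
      apply iinj. rewrite hfunA, !jker; auto.
    - exfalso; apply H'. rewrite hfunA, H. apply sact_base.
    - rewrite hfunA in H'.
      assert (Hn : sact N a n = sbase N).
      { rewrite <- (sj n H), <- hfunA, H'. apply hom_base. }
      rewrite Hn, <- (@hom_base _ _ _ i), iinvi, H', sact_base. reflexivity.
    - rewrite sact_base, hfunA. reflexivity. }
  set (beta := @AHom A N (wedge M P) (beta_fun i j) bA).
  set (ginv := fun x : wedge_car M P =>
          match excluded_middle_informative (snd (proj1_sig x) = sbase P) with
          | left _ => i (fst (proj1_sig x))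
          | right _ => s (snd (proj1_sig x)) end).
  assert (gA : forall a x, ginv (sact (wedge M P) a x) = sact N a (ginv x)).
  { intros a [[m p] Hx]. unfold ginv; simpl.
    destruct (excluded_middle_informative (p = sbase P)) as [H|H];
    destruct (excluded_middle_informative (sact P a p = sbase P)) as [H'|H'];
    simpl.
    - apply hfunA.
    - exfalso; apply H'; rewrite H; apply sact_base.
    - destruct Hx as [Hx|Hx]; [|contradiction]. simpl in Hx. rewrite Hx.
      rewrite sact_base, hom_base, <- hfunA, H', hom_base. reflexivity.
    - apply hfunA. }
  set (gamma := @AHom A (wedge M P) N ginv gA).
  exists idM, beta, idP.
  split; [exists idM; split; reflexivity|].
  split.
  { exists gamma. split.
    - intros n. simpl. unfold beta_fun, ginv.
      destruct (excluded_middle_informative (j n = sbase P)) as [H|H]; simpl.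
      + destruct (excluded_middle_informative (sbase P = sbase P)); [|congruence].
        simpl. apply jker; auto.
      + destruct (excluded_middle_informative (j n = sbase P)); [congruence|].
        simpl. apply sj; auto.
    - intros [[m p] Hx]. apply wedge_eq. simpl. unfold ginv, beta_fun; simpl.
      destruct (excluded_middle_informative (p = sbase P)) as [H|H]; simpl.
      + rewrite ji. destruct (excluded_middle_informative (sbase P = sbase P)); [|congruence].
        simpl. rewrite iinvi, H. reflexivity.
      + rewrite Hs. destruct (excluded_middle_informative (p = sbase P)); [congruence|].
        simpl. destruct Hx as [Hx|Hx]; [|contradiction]. simpl in Hx. rewrite Hx. reflexivity. }
  split; [exists idP; split; reflexivity|].
  split.
  - intros m. apply wedge_eq. simpl. unfold beta_fun.
    destruct (excluded_middle_informative (j (i m) = sbase P)) as [H|H].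
    + simpl. rewrite iinvi. reflexivity.
    + contradiction (ji m).
  - intros n. simpl. unfold beta_fun.
    destruct (excluded_middle_informative (j n = sbase P)); simpl; auto.
Qed.
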